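(* Let $(X,\tau)$ be a topological space, $\mathcal{V}\in T(\tau)$, $\mathcal{B}=\mathcal{B}(\mathcal{V}_\omega)$, and let $U\in\mathcal{V}$ be a transitive entourage. Then $U(A)\in\mathcal{B}$ for every $A\subseteq X$.
   Context: Quasi-uniformities and quasi-proximities are in the sense of Fletcher–Lindgren. For a quasi-uniformity $\mathcal{V}$, $\delta(\mathcal{V})$ is the induced quasi-proximity; $\pi(\delta)$ is the set of quasi-uniformities inducing $\delta$, and $\mathcal{V}_\omega$ denotes the coarsest element of $\pi(\delta(\mathcal{V}))$ (it is totally bounded). $T(\tau)$ is the set of compatible transitive quasi-uniformities on $(X,\tau)$ (transitive = having a base of entourages $U$ with $U\circ U\subseteq U$). For $U\subseteq X\times X$ and $A\subseteq X$, $U(x)=\{y:(x,y)\in U\}$ and $U(A)=\bigcup_{a\in A}U(a)$. For $N\subseteq X$, $U_N=(N\times N)\cup((X\setminus N)\times X)$, and for a compatible quasi-uniformity $\mathcal{W}$, $\mathcal{B}(\mathcal{W})=\{N\in\tau:U_N\in\mathcal{W}\}$. *)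

(* Defs.v *)
From Stdlib Require Import Classical.

Definition set (X : Type) := X -> Prop.
Definition rel (X : Type) := X -> X -> Prop.

Definition is_topology {X : Type} (tau : set X -> Prop) : Prop :=
  tau (fun _ => False) /\ tau (fun _ => True) /\
  (forall F : set X -> Prop, (forall G, F G -> tau G) ->
     tau (fun x => exists G, F G /\ G x)) /\
  (forall G H, tau G -> tau H -> tau (fun x => G x /\ H x)).

(* composition U o V (for U o U the order convention is irrelevant) *)
Definition comp {X : Type} (U V : rel X) : rel X :=
  fun x z => exists y, V x y /\ U y z.

Definition subrel {X : Type} (U V : rel X) : Prop := forall x y, U x y -> V x y.

Definition image {X : Type} (U : rel X) (A : set X) : set X :=
  fun y => exists a, A a /\ U a y.

Definition quasi_uniformity {X : Type} (W : rel X -> Prop) : Prop :=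
  W (fun _ _ => True) /\
  (forall U V, W U -> subrel U V -> W V) /\
  (forall U V, W U -> W V -> W (fun x y => U x y /\ V x y)) /\
  (forall U, W U -> forall x, U x x) /\
  (forall U, W U -> exists V, W V /\ subrel (comp V V) U).

Definition qu_open {X : Type} (W : rel X -> Prop) (G : set X) : Prop :=
  forall x, G x -> exists U, W U /\ forall y, U x y -> G y.

Definition compatible {X : Type} (tau : set X -> Prop) (W : rel X -> Prop) : Prop :=
  forall G, tau G <-> qu_open W G.

Definition transitive_rel {X : Type} (U : rel X) : Prop := subrel (comp U U) U.

Definition transitive_qu {X : Type} (W : rel X -> Prop) : Prop :=
  forall U, W U -> exists V, W V /\ transitive_rel V /\ subrel V U.

Definition in_T {X : Type} (tau : set X -> Prop) (W : rel X -> Prop) : Prop :=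
  quasi_uniformity W /\ compatible tau W /\ transitive_qu W.

Definition delta {X : Type} (W : rel X -> Prop) (A B : set X) : Prop :=
  forall U, W U -> exists a b, A a /\ B b /\ U a b.

Definition in_pi {X : Type} (d : set X -> set X -> Prop) (W : rel X -> Prop) : Prop :=
  quasi_uniformity W /\ forall A B, delta W A B <-> d A B.

Definition is_V_omega {X : Type} (V W : rel X -> Prop) : Prop :=
  in_pi (delta V) W /\
  forall W', in_pi (delta V) W' -> forall U, W U -> W' U.

Definition U_N {X : Type} (N : set X) : rel X :=
  fun x y => (N x /\ N y) \/ ~ N x.

Definition Bset {X : Type} (tau : set X -> Prop) (W : rel X -> Prop) (N : set X) : Prop :=
  tau N /\ W (U_N N).

(* Main.v *)
Require Import Defs.
From Stdlib Require Import Classical.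

Theorem lemma2p2 (X : Type) (tau : set X -> Prop) (V Vw : rel X -> Prop)
  (U : rel X) :
  is_topology tau ->
  in_T tau V ->
  is_V_omega V Vw ->
  V U -> transitive_rel U ->
  forall A : set X, Bset tau Vw (image U A).
Proof.
  intros Htop [HqV [Hcomp Htr]] [[HqW Hpi] _] HU HtU A.
  assert (Hcl : forall a b, image U A a -> U a b -> image U A b).
  { intros a b [c [Hc Hca]] Hab. exists c. split; [exact Hc|].
    apply HtU. exists a. split; assumption. }
  split.
  - apply Hcomp. intros x Hx. exists U. split; [exact HU|].
    intros y Hy. exact (Hcl x y Hx Hy).
  - assert (Hnd : ~ delta V (image U A) (fun y => ~ image U A y)).
    { intros Hd. destruct (Hd U HU) as [a [b [Ha [Hb Hab]]]].
      apply Hb. exact (Hcl a b Ha Hab). }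
    rewrite <- Hpi in Hnd.
    apply not_all_ex_not in Hnd. destruct Hnd as [W HW].
    apply imply_to_and in HW. destruct HW as [HWw HW].
    destruct HqW as [_ [Hup _]].
    apply (Hup W); [exact HWw|].
    intros x y Hxy. unfold U_N.
    destruct (classic (image U A x)) as [Hx|Hx]; [|right; exact Hx].
    left. split; [exact Hx|].
    apply NNPP. intros Hy. apply HW. exists x, y. auto.
Qed.
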